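(* In the BBoxER framework described in the context, fix $m_0,\omega,a,b$ and distinct datasets $D_1,\dots,D_n$. If $k_i\le 2$ for all $i$ and $n>2^b$, then the algorithm $A(m_0,D)=\mathrm{BBoxER}(m_0,\omega,D,a,b)$ is not vulnerable to data extraction for $(D_1,\dots,D_n)$. More generally, $A$ is not vulnerable to data extraction for $(D_1,\dots,D_n)$ whenever $n>\sup_D\prod_{i=1}^b k_i(\omega,D,a,b)$.
   Context: $\mathrm{BBoxER}(m_0,\omega,D,a,b)$ is the model output by: a black-box optimization algorithm $a$, deterministic given its seed $\omega$, initialized from $\omega$; at each iteration $i=1,\dots,b$ it proposes $x_i$ and model $m_i=\mathrm{modified}(m_0,x_i)$, declares a finite number $k_i=k_i(\omega,D,a,b)\ge1$ of possible comparison outcomes, and receives $\mathrm{choice}_i\in\{1,\dots,k_i\}$ computed by comparing $m_1,\dots,m_i$ on the dataset $D$; finally it outputs $\mathrm{modified}(m_0,\widehat x)$ where the recommendation $\widehat x$ is a deterministic function of $(\omega,a,b,\mathrm{choice}_1,\dots,\mathrm{choice}_b)$ (the algorithm accesses $D$ only through the $\mathrm{choice}_i$). Definition: an algorithm $A$ producing $A(m_0,D)$ from a model $m_0$ and a dataset $D$ is vulnerable to data extraction for $(D_1,\dots,D_n)$ (all distinct) if there exists a mapping $E$ such that $E(A(m_0,D_i))=i$ for all $i\in\{1,\dots,n\}$. *)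

(* Defs.v *)
From mathcomp Require Import all_boot.
Set Implicit Arguments. Unset Strict Implicit. Unset Printing Implicit Defensive.

(* A black-box optimization algorithm, once its identity [a], its seed [omega]
   and its budget [b] are fixed, is a deterministic procedure described by:
   - [propose i cs]  : the candidate x_i proposed at iteration i (1-based),
                       given the previous comparison outcomes
                       cs = [:: choice_1; ...; choice_(i-1)];
   - [arity i cs]    : the number k_i of possible comparison outcomes it
                       declares at iteration i, given the same history;
   - [recommend cs]  : the final recommendation x_hat, given all b outcomes. *)
Record bbo (X : Type) := BBO {
  propose : nat -> seq nat -> X;
  arity : nat -> seq nat -> nat;
  recommend : seq nat -> X }.

Section BBoxER.
Variables (Omega Alg X Model Dataset : Type).
Variable alg : Omega -> Alg -> nat -> bbo X.
Variable modified : Model -> X -> Model.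
(* cmp D [:: m_1; ...; m_i] k : the comparison outcome obtained by comparing
   m_1, ..., m_i on the dataset D, among k declared possible outcomes. *)
Variable cmp : Dataset -> seq Model -> nat -> nat.

Definition proposed_models (A : bbo X) (m0 : Model) (i : nat) (cs : seq nat) :
  seq Model :=
  [seq modified m0 (propose A j (take j.-1 cs)) | j <- iota 1 i].

Fixpoint choices (m0 : Model) (omega : Omega) (D : Dataset) (a : Alg) (b t : nat)
  : seq nat :=
  match t with
  | 0 => [::]
  | t'.+1 =>
      let A := alg omega a b in
      let cs := choices m0 omega D a b t' in
      rcons cs (cmp D (proposed_models A m0 t'.+1 cs) (arity A t'.+1 cs))
  end.

(* choice_i (1-based) *)
Definition choice m0 omega D a b (i : nat) : nat :=
  nth 0 (choices m0 omega D a b i) i.-1.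

(* k_i(omega, D, a, b) (1-based) *)
Definition k_ m0 omega D a b (i : nat) : nat :=
  arity (alg omega a b) i (choices m0 omega D a b i.-1).

Definition BBoxER (m0 : Model) (omega : Omega) (D : Dataset) (a : Alg) (b : nat)
  : Model :=
  modified m0 (recommend (alg omega a b) (choices m0 omega D a b b)).

End BBoxER.

Definition vulnerable (Model Dataset : Type) (A : Model -> Dataset -> Model)
  (m0 : Model) (n : nat) (Ds : 'I_n -> Dataset) : Prop :=
  exists E : Model -> 'I_n, forall i : 'I_n, E (A m0 (Ds i)) = i.

(* Main.v *)
Require Import Defs.
From mathcomp Require Import all_boot.
Set Implicit Arguments. Unset Strict Implicit.

Lemma size_split_head (S : seq (seq nat)) k :
  (forall s, s \in S -> 0 < head 0 s <= k) ->
  size S = \sum_(c < k) count (fun s => head 0 s == c.+1) S.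
Proof.
elim: S => [|x S IH] H /=.
  by rewrite big1.
rewrite big_split /= -IH; last by move=> s Hs; apply: H; rewrite inE Hs orbT.
have /andP[h0 hk] := H x (mem_head _ _).
have hlt : (head 0 x).-1 < k by rewrite prednK.
rewrite (bigD1 (Ordinal hlt)) //= prednK // eqxx big1 ?add1n //.
move=> i /eqP Hi; apply/eqP; rewrite eqb0; apply/eqP => E.
apply: Hi; apply: val_inj => /=; rewrite E.
by [].
Qed.

Lemma count_paths b (ar : seq nat -> nat) (S : seq (seq nat)) N :
  uniq S ->
  (forall s, s \in S -> [/\ size s = b,
     (forall j, j < b -> 0 < nth 0 s j <= ar (take j s)) &
     \prod_(j < b) ar (take j s) <= N]) ->
  size S <= N.
Proof.
elim: b ar S N => [|b IH] ar S N uS H.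
  case: S uS H => [|x [|y S]] //= uS H.
    by have [_ _] := H x (mem_head _ _); rewrite big_ord0.
  have [/size0nil Hx _ _] := H x (mem_head _ _).
  have [/size0nil Hy _ _] := H y ltac:(by rewrite !inE eqxx orbT).
  by move: uS; rewrite Hx Hy inE eqxx.
set k := ar [::].
case: S uS H => [|x0 S0] uS H; first by [].
have kpos : 0 < k.
  have [_ Hb _] := H x0 (mem_head _ _).
  by have /andP[h1 h2] := Hb 0 isT; rewrite take0 in h2; apply: leq_trans h1 h2.
move: (x0 :: S0) uS H => S uS H.
have Hhead : forall s, s \in S -> 0 < head 0 s <= k.
  move=> s Hs; have [Hsz Hb _] := H s Hs.
  by case: s Hsz Hb {Hs} => // c t _ Hb; have := Hb 0 isT.
rewrite (size_split_head Hhead).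
apply: (@leq_trans (\sum_(c < k) (N %/ k))); last first.
  by rewrite sum_nat_const card_ord mulnC leq_trunc_div.
apply: leq_sum => c _.
set Sc := [seq behead s | s <- S & head 0 s == c.+1].
have -> : count (fun s => head 0 s == c.+1) S = size Sc by rewrite size_map size_filter.
apply: (IH (fun t => ar (c.+1 :: t))).
  rewrite map_inj_in_uniq ?filter_uniq //.
  move=> s1 s2; rewrite !mem_filter => /andP[h1 i1] /andP[h2 i2] E.
  have [sz1 _ _] := H _ i1; have [sz2 _ _] := H _ i2.
  case: s1 sz1 h1 E {i1} => // c1 t1 _ /eqP /= ->.
  by case: s2 sz2 h2 {i2} => // c2 t2 _ /eqP /= -> /= ->.
move=> t /mapP [s]; rewrite mem_filter => /andP[/eqP hs Hs] ->.
have [sz Hb Hp] := H s Hs.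
case: s sz Hb Hp hs {Hs} => // c' t' [sz] Hb Hp /= hc; subst c'.
split => //.
  by move=> j Hj; have := Hb j.+1 Hj.
rewrite leq_divRL // mulnC.
by move: Hp; rewrite big_ord_recl /=.
Qed.

Section Aux.
Variables (Omega Alg X Model Dataset : Type).
Variable alg : Omega -> Alg -> nat -> bbo X.
Variable modified : Model -> X -> Model.
Variable cmp : Dataset -> seq Model -> nat -> nat.

Lemma size_choices m0 omega D a b t :
  size (choices alg modified cmp m0 omega D a b t) = t.
Proof. by elim: t => //= t IH; rewrite size_rcons IH. Qed.

Lemma take_choices m0 omega D a b t u : t <= u ->
  take t (choices alg modified cmp m0 omega D a b u) =
  choices alg modified cmp m0 omega D a b t.
Proof.
elim: u => [|u IH]; first by rewrite leqn0 => /eqP ->.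
rewrite leq_eqVlt => /orP[/eqP ->|Ht].
  by rewrite take_oversize // size_choices.
by rewrite /= -cats1 takel_cat ?IH // size_choices.
Qed.
End Aux.

Theorem corollary2
  (Omega Alg X Model Dataset : Type)
  (alg : Omega -> Alg -> nat -> bbo X)
  (modified : Model -> X -> Model)
  (cmp : Dataset -> seq Model -> nat -> nat)
  (m0 : Model) (omega : Omega) (a : Alg) (b : nat)
  (n : nat) (Ds : 'I_n -> Dataset)
  (Hdistinct : injective Ds)
  (* framework: k_i >= 1 and choice_i \in {1, ..., k_i}, for every dataset *)
  (Hk_pos : forall (D : Dataset) (i : nat), 1 <= i <= b ->
     1 <= k_ alg modified cmp m0 omega D a b i)
  (Hchoice : forall (D : Dataset) (i : nat), 1 <= i <= b ->
     1 <= choice alg modified cmp m0 omega D a b i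
       <= k_ alg modified cmp m0 omega D a b i) :
  let A := fun (m : Model) (D : Dataset) => BBoxER alg modified cmp m omega D a b in
  ((forall (D : Dataset) (i : nat), 1 <= i <= b ->
      k_ alg modified cmp m0 omega D a b i <= 2) ->
    2 ^ b < n -> ~ vulnerable A m0 Ds)
  /\
  ((* n > sup_D prod_{i=1}^b k_i(omega, D, a, b)  (sup of naturals) *)
   (forall D : Dataset,
      \prod_(1 <= i < b.+1) k_ alg modified cmp m0 omega D a b i < n) ->
    ~ vulnerable A m0 Ds).
Proof.
move=> A.
have P2 : forall N, (forall D : Dataset,
      \prod_(1 <= i < b.+1) k_ alg modified cmp m0 omega D a b i <= N) ->
      N < n -> ~ vulnerable A m0 Ds.
  move=> N HN Nn [E HE].
  pose cs i := choices alg modified cmp m0 omega (Ds i) a b b.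
  have csinj : injective cs.
    move=> i j Hij; rewrite -(HE i) -(HE j) /A /BBoxER.
    by rewrite -/(cs i) -/(cs j) Hij.
  have : size (map cs (enum 'I_n)) <= N.
    apply: (@count_paths b (fun t => arity (alg omega a b) (size t).+1 t)).
      by rewrite map_inj_uniq ?enum_uniq.
    move=> s /mapP [i _ ->]; split.
    - by rewrite size_choices.
    - move=> j Hj.
      have := Hchoice (Ds i) j.+1 Hj.
      rewrite /choice /k_ !succnK -(@take_choices _ _ _ _ _ alg modified cmp m0 omega (Ds i) a b _ _ Hj) nth_take //.
      by rewrite -(@take_choices _ _ _ _ _ alg modified cmp m0 omega (Ds i) a b _ _ (ltnW Hj)) size_takel ?size_choices ?(ltnW Hj).
    - apply: leq_trans (HN (Ds i)).
      rewrite big_add1 /= big_mkord leq_eqVlt; apply/orP; left; apply/eqP.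
      apply: eq_bigr => j _.
      rewrite /k_ -(@take_choices _ _ _ _ _ alg modified cmp m0 omega (Ds i) a b _ _ (ltnW (ltn_ord j))).
      by rewrite size_takel // size_choices ltnW.
  by rewrite size_map size_enum_ord => /(leq_trans Nn); rewrite ltnn.
split.
  move=> Hk Hn; apply: (P2 (2 ^ b)) => // D.
  rewrite big_seq; apply: (@leq_trans (\prod_(i <- index_iota 1 b.+1 | i \in index_iota 1 b.+1) 2)).
    by apply: leq_prod => i; rewrite mem_index_iota => /Hk.
  by rewrite -big_seq prod_nat_const_nat subSS subn0.
move=> HN [E HE].
have n0 : 0 < n by case: (E m0) => m Hm; exact: (leq_ltn_trans (leq0n m) Hm).
apply: (P2 n.-1) => //; last by [exists E].
  by move=> D; rewrite -ltnS prednK ?HN.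
by rewrite prednK.
Qed.
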